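(* Let $G$ be a topological groupoid and $Z$ a topological space with a right action of $G$ (momentum map $p\colon Z\to G^{(0)}$). Consider: (i) $G$ acts properly on $Z$; (ii) $(r,s)\colon Z\rtimes G\to Z\times Z$, $(z,g)\mapsto(z,zg)$, is closed and for every $z\in Z$ the stabilizer $\{g\in G: p(z)=r(g), zg=z\}$ is quasi-compact; (iii) for all quasi-compact $K,L\subset Z$, $\{g\in G: Lg\cap K\neq\emptyset\}$ is quasi-compact; (iii)' for all compact $K,L\subset Z$, $\{g\in G: Lg\cap K\neq\emptyset\}$ is quasi-compact; (iv) for every quasi-compact $K\subset Z$, $\{g\in G: Kg\cap K\neq\emptyset\}$ is quasi-compact; (v) there is a family $(A_i)_{i\in I}$ of subsets of $Z$ with $Z=\bigcup_i\mathrm{int}(A_i)$ such that $\{g\in G: A_ig\cap A_j\neq\emptyset\}$ is relatively quasi-compact for all $i,j\in I$. Then (i)$\iff$(ii)$\implies$(iii)$\implies$(iii)' and (iii)$\implies$(iv). If $Z$ is locally compact, then (iii)'$\implies$(v) and (iv)$\implies$(v). If $G^{(0)}$ is Hausdorff and $Z$ is locally compact Hausdorff, then (i)–(v) are all equivalent.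
   Context: Quasi-compact: every open cover has a finite subcover; compact: quasi-compact Hausdorff; locally compact: every point has a compact neighbourhood. A subset is relatively quasi-compact if contained in a quasi-compact subset. A continuous map is proper if closed with quasi-compact fibres; a groupoid is proper if $(r,s)$ onto unit space squared is proper. A right action: $zg$ defined when $p(z)=r(g)$, with $p(zg)=s(g)$. $Z\rtimes G=\{(z,g)\in Z\times G: p(z)=r(g)\}$ is a groupoid with unit space $Z$, range $(z,g)\mapsto z$, source $(z,g)\mapsto zg$. The action is proper if $Z\rtimes G$ is a proper groupoid. $Lg=\{zg: z\in L, p(z)=r(g)\}$. *)

(* Defs.v *)
From HB Require Import structures.
From mathcomp Require Import all_boot all_order all_algebra.
From mathcomp Require Import all_classical all_reals all_analysis.
Set Implicit Arguments. Unset Strict Implicit. Unset Printing Implicit Defensive.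
Local Open Scope classical_set_scope.

(* NB: mathcomp-analysis' [compact A] is filter-based quasi-compactness
   (no Hausdorff condition), i.e. the paper's "quasi-compact". *)

(* Paper's "compact": quasi-compact and Hausdorff (in the subspace topology). *)
Definition compact_set {T : topologicalType} (K : set T) : Prop :=
  compact K /\
  forall x y, K x -> K y -> x <> y ->
    exists U V : set T, [/\ open U, open V, U x, V y & U `&` V `&` K = set0].

Definition loc_compact (T : topologicalType) : Prop :=
  forall x : T, exists N : set T, nbhs x N /\ compact_set N.

Definition rel_quasi_compact {T : topologicalType} (S : set T) : Prop :=
  exists C : set T, compact C /\ S `<=` C.

(* A map defined on a subset D (with the subspace topology) is closed:
   relatively closed subsets of D are exactly D `&` C with C closed. *)
Definition closed_map_on {T U : topologicalType} (D : set T) (f : T -> U) : Prop :=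
  forall C : set T, closed C -> closed (f @` (D `&` C)).

Definition proper_map_on {T U : topologicalType} (D : set T) (f : T -> U) : Prop :=
  closed_map_on D f /\ forall y : U, compact (D `&` f @^-1` [set y]).

(* Topological groupoid with arrow space G and unit space X; the unit
   inclusion is [unit : X -> G] (a homeomorphism onto its image, since
   [rg \o unit = id]); multiplication [mul g h] is meaningful when
   [sg g = rg h]. *)
Record topGroupoid (G X : topologicalType) := TopGroupoid {
  rg : G -> X;
  sg : G -> X;
  unit : X -> G;
  mul : G -> G -> G;
  inv : G -> G;
  rg_unit : forall x, rg (unit x) = x;
  sg_unit : forall x, sg (unit x) = x;
  rg_mul : forall g h, sg g = rg h -> rg (mul g h) = rg g;
  sg_mul : forall g h, sg g = rg h -> sg (mul g h) = sg h;
  mulA : forall g h k, sg g = rg h -> sg h = rg k ->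
           mul (mul g h) k = mul g (mul h k);
  mul_unitl : forall g, mul (unit (rg g)) g = g;
  mul_unitr : forall g, mul g (unit (sg g)) = g;
  rg_inv : forall g, rg (inv g) = sg g;
  sg_inv : forall g, sg (inv g) = rg g;
  mulV : forall g, mul g (inv g) = unit (rg g);
  mulVl : forall g, mul (inv g) g = unit (sg g);
  rg_cont : continuous rg;
  sg_cont : continuous sg;
  unit_cont : continuous unit;
  inv_cont : continuous inv;
  mul_cont : {within [set gh : G * G | sg gh.1 = rg gh.2],
                continuous (fun gh : G * G => mul gh.1 gh.2)}
}.

(* Continuous right action of a topological groupoid on a space Z,
   with momentum map [mom]; [act z g] = zg, meaningful when mom z = rg g. *)
Record rightAction (G X : topologicalType) (Gd : topGroupoid G X)
    (Z : topologicalType) := RightAction {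
  mom : Z -> X;
  act : Z -> G -> Z;
  mom_act : forall z g, mom z = rg Gd g -> mom (act z g) = sg Gd g;
  act_unit : forall z, act z (unit Gd (mom z)) = z;
  act_mul : forall z g h, mom z = rg Gd g -> sg Gd g = rg Gd h ->
              act (act z g) h = act z (mul Gd g h);
  mom_cont : continuous mom;
  act_cont : {within [set zg : Z * G | mom zg.1 = rg Gd zg.2],
                continuous (fun zg : Z * G => act zg.1 zg.2)}
}.

Section Conditions.
Context {G X Z : topologicalType} {Gd : topGroupoid G X} (A : rightAction Gd Z).

(* arrows space of the transformation groupoid Z ⋊ G, as a subspace of Z × G *)
Definition trans_arrows : set (Z * G) :=
  [set zg | mom A zg.1 = rg Gd zg.2].

Definition trans_rs (zg : Z * G) : Z * Z := (zg.1, act A zg.1 zg.2).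

(* (i): the action is proper, i.e. Z ⋊ G is a proper groupoid:
   (r,s) : Z ⋊ G -> (Z ⋊ G)^(0) × (Z ⋊ G)^(0) = Z × Z is proper. *)
Definition proper_action : Prop := proper_map_on trans_arrows trans_rs.

Definition stabilizer (z : Z) : set G :=
  [set g | mom A z = rg Gd g /\ act A z g = z].

Definition transporter (L K : set Z) : set G :=
  [set g | exists z, [/\ L z, mom A z = rg Gd g & K (act A z g)]].

Definition cond_ii : Prop :=
  closed_map_on trans_arrows trans_rs /\ forall z, compact (stabilizer z).

Definition cond_iii : Prop :=
  forall K L : set Z, compact K -> compact L -> compact (transporter L K).

Definition cond_iii' : Prop :=
  forall K L : set Z, compact_set K -> compact_set L -> compact (transporter L K).

Definition cond_iv : Prop :=
  forall K : set Z, compact K -> compact (transporter K K).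

Definition cond_v : Prop :=
  exists (I : Type) (As : I -> set Z),
    \bigcup_(i in [set: I]) interior (As i) = [set: Z] /\
    forall i j, rel_quasi_compact (transporter (As i) (As j)).

End Conditions.

(* Main.v *)
Set Warnings "-notation-overridden,-ambiguous-paths,-notation-incompatible-prefix".
Require Import Defs.
From mathcomp Require Import all_boot all_order all_algebra.
From mathcomp Require Import all_classical all_reals all_analysis.
Local Open Scope classical_set_scope.
Section Gen.
Context {T U : topologicalType}.

Lemma ultra_fmap (F : set_system T) (f : T -> U) :
  UltraFilter F -> UltraFilter (f @ F).
Proof.
move=> FU; split; first exact: fmap_proper_filter.
move=> G GF sFG; apply/seteqP; split=> A GA; last exact: sFG.
have [//|FnA] := in_ultra_setVsetC (f @^-1` A) FU.
have : G (A `&` ~` A) by apply: filterI => //; exact: sFG.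
by rewrite setICr => /filter_ex [].
Qed.

Definition Pultra (D : set T) (f : T -> U) := forall F, UltraFilter F ->
  F D -> forall w, f @ F --> w -> exists y, [/\ D y, f y = w & F --> y].

Lemma proper_Pultra D f : proper_map_on D f -> Pultra D f.
Proof.
case=> fcl fco F FU FD w Fw.
pose Phi := D `&` f @^-1` [set w].
pose G := filter_from F (fun E => Phi `&` closure E).
have GF : ProperFilter G.
  apply: filter_from_proper.
    apply: filter_from_filter; first by exists setT; exact: filterT.
    move=> E1 E2 FE1 FE2; exists (E1 `&` E2); first exact: filterI.
    move=> p [Pp cp]; split; split=> //; apply: closureS cp => ? []//.
  move=> E FE.
  have : closure (f @` (D `&` closure E)) w.
    move=> B /Fw FB.
    have /filter_ex [p [[Dp Ep] Bfp]] : F (D `&` E `&` f @^-1` B).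
      by apply: filterI => //; exact: filterI.
    exists (f p); split => //; exists p => //; split => //.
    exact: subset_closure.
  move: (fcl _ (@closed_closure _ E)) => /closure_id <-.
  by case=> p [Dp cEp] fpw; exists p.
have GPhi : G Phi by exists setT; [exact: filterT| move=> ? []].
have [y [Phiy cly]] := fco w G GF GPhi.
exists y; case: Phiy => Dy fyw; split => //.
rewrite -[_ --> _]/([set p | F --> p] y) -ultra_cvg_clusterE.
move=> E B FE /nbhs_interior By.
have [q [[_ cEq] Bq]] := cly _ _ (ex_intro2 _ _ E FE (fun x H => H)) By.
exact: cEq.
Qed.

Lemma Pultra_proper D f : Pultra D f -> proper_map_on D f.
Proof.
move=> PD; split.
  move=> C Ccl w cw.
  pose F0 := filter_from (nbhs w) (fun B => D `&` C `&` f @^-1` B).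
  have F0F : ProperFilter F0.
    apply: filter_from_proper.
      apply: filter_from_filter; first by exists setT; exact: filterT.
      move=> B1 B2 N1 N2; exists (B1 `&` B2); first exact: filterI.
      by move=> p [[Dp Cp] [B1p B2p]]; split; split.
    by move=> B /cw [x [[p [Dp Cp] fpx] Bx]]; exists p; split => //; rewrite /= fpx.
  have [G [GU sFG]] := ultraFilterLemma F0F.
  have GD : G D by apply: sFG; exists setT; [exact: filterT| move=> ? [[]]].
  have GC : G C by apply: sFG; exists setT; [exact: filterT| move=> ? [[]]].
  have Gw : f @ G --> w.
    by move=> B Bw; apply: sFG; exists B => // ? [].
  have [y [Dy fyw Gy]] := PD G GU GD w Gw.
  exists y => //; split => //; apply: Ccl => B /Gy GB.
  exact: (@filter_ex _ G _ _ (filterI GC GB)).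
move=> w; rewrite compact_ultra /= => F FU FPhi.
have FD : F D by apply: filterS (FPhi) => ? [].
have Fw : f @ F --> w.
  move=> B /nbhs_singleton Bw; suff : F (f @^-1` B) by []. by apply: filterS (FPhi) => p [_ fpw]; rewrite /= fpw.
have [y [Dy fyw Fy]] := PD F FU FD w Fw.
by exists y.
Qed.

Lemma Pultra_compact D f K : Pultra D f -> compact K ->
  compact (D `&` f @^-1` K).
Proof.
rewrite !compact_ultra /= => PD Kc F FU FDK.
have FD : F D by apply: filterS (FDK) => ? [].
have FK : F (f @^-1` K) by apply: filterS (FDK) => ? [].
have [w [Kw Fw]] := Kc (f @ F) (ultra_fmap _ f FU) (FK : (f @ F) K).
have [y [Dy fyw Fy]] := PD F FU FD w Fw.
by exists y; split => //; split => //=; rewrite fyw.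
Qed.

End Gen.
Section Act.
Context {G X Z : topologicalType} {Gd : topGroupoid G X} (A : rightAction Gd Z).
Local Notation D := (trans_arrows A).
Local Notation f := (trans_rs A).

Lemma stab_of_proper : proper_action A -> forall z, compact (stabilizer A z).
Proof.
move=> [_ fco] z.
have -> : stabilizer A z = snd @` (D `&` f @^-1` [set (z,z)]).
  apply/seteqP; split => [g [h1 h2]|_ [[z' g] [Dp fp] <-]].
    by exists (z,g) => //; split => //; rewrite /trans_rs /= h2.
  by case: fp => ez' ea; subst z'; split.
apply: continuous_compact (fco (z,z)).
by apply: continuous_subspaceT => p; exact: cvg_snd.
Qed.

Lemma fib_of_stab : (forall z, compact (stabilizer A z)) ->
  forall y, compact (D `&` f @^-1` [set y]).
Proof.
move=> sc [z w].
have [[g0 [e0 a0]]|nex] := pselect (exists g0, mom A z = rg Gd g0 /\ act A z g0 = w); last first.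
  have -> : D `&` f @^-1` [set (z,w)] = set0.
    apply/seteqP; split => // [[z' g]] [Dp fp]; case: fp => ez ea; subst z'.
    by apply: nex; exists g.
  exact: compact0.
have sg0 : sg Gd g0 = mom A w by rewrite -a0 (mom_act e0).
have -> : D `&` f @^-1` [set (z,w)] = (fun h => (z, Defs.mul Gd h g0)) @` stabilizer A z.
  apply/seteqP; split.
    move=> [z' g] [Dp fp]; case: fp => ez ea; subst z'.
    have sgg : sg Gd g = mom A w by rewrite -ea (mom_act Dp).
    have e1 : sg Gd g = rg Gd (Defs.inv Gd g0) by rewrite Defs.rg_inv sgg sg0.
    exists (Defs.mul Gd g (Defs.inv Gd g0)).
      split; first by rewrite Defs.rg_mul.
      rewrite -act_mul // ea -a0 act_mul //; last by rewrite Defs.rg_inv.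
      by rewrite Defs.mulV -e0 act_unit.
    rewrite Defs.mulA //; last by rewrite Defs.sg_inv.
    by rewrite Defs.mulVl sg0 -sgg Defs.mul_unitr.
  move=> _ [h [h1 h2] <-].
  have sgh : sg Gd h = rg Gd g0 by rewrite -(mom_act h1) h2.
  split; first by rewrite /trans_arrows /= Defs.rg_mul.
  by rewrite /trans_rs /= -act_mul // h2 a0.
apply: continuous_compact (sc z).
apply/subspace_continuousP => h [h1 h2].
have sgh : sg Gd h = rg Gd g0 by rewrite -(mom_act h1) h2.
apply: (@cvg_pair _ _ _ _ (nbhs z) (nbhs (Defs.mul Gd h g0))); first exact: cvg_cst.
have mc := (subspace_continuousP _ _).1 (@Defs.mul_cont _ _ Gd) (h, g0) sgh.
apply: cvg_trans mc.
move=> P /= [[N1 N2] [/= n1 n2] sub].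
apply: filterS n1 => x N1x [x1 x2].
have Bx : sg Gd x = rg Gd g0 by rewrite -(mom_act x1) x2 e0.
exact: (sub (x, g0) (conj N1x (nbhs_singleton n2)) Bx).
Qed.

Lemma transporterE L K :
  transporter A L K = snd @` (D `&` f @^-1` (L `*` K)).
Proof.
apply/seteqP; split => [g [z [Lz mz Kz]]|_ [[z g] [Dp [Lz Kz]] <-]].
  by exists (z,g).
by exists z.
Qed.

Lemma iii_of_proper : proper_action A -> cond_iii A.
Proof.
move=> /proper_Pultra PU K L Kc Lc; rewrite transporterE.
apply: continuous_compact; first by apply: continuous_subspaceT => p; exact: cvg_snd.
by apply: Pultra_compact => //; exact: compact_setX.
Qed.

Lemma Pultra_of_v : hausdorff_space X -> hausdorff_space Z -> cond_v A ->
  Pultra D f.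
Proof.
move=> hX hZ [I [As [cov rqc]]] F FU FD [w1 w2] Fw.
have F1 : (fst : Z * G -> Z) @ F --> w1.
  move=> B Bw; have : nbhs (w1, w2) (B `*` setT).
    by exists (B, setT) => //; split => //; exact: filterT.
  move=> /Fw H; suff : F (fst @^-1` B) by [].
  have H' : F (f @^-1` (B `*` setT)) := H.
  by apply: filterS H' => p [].
have F2 : (fun p : Z * G => act A p.1 p.2) @ F --> w2.
  move=> B Bw; have : nbhs (w1, w2) (setT `*` B).
    by exists (setT, B) => //; split => //; exact: filterT.
  move=> /Fw H; suff : F ((fun p : Z * G => act A p.1 p.2) @^-1` B) by [].
  have H' : F (f @^-1` (setT `*` B)) := H.
  by apply: filterS H' => p [].
have : [set: Z] w1 by []; rewrite -cov => -[i _ wi].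
have : [set: Z] w2 by []; rewrite -cov => -[j _ wj].
have [C [Cc sub]] := rqc i j.
have FC : F (snd @^-1` C).
  have Fi : F (fst @^-1` As i) := F1 _ wi.
  have Fj : F ((fun p : Z * G => act A p.1 p.2) @^-1` As j) := F2 _ wj.
  by apply: filterS (filterI FD (filterI Fi Fj)) => -[z g] [Dp [ai aj]]; apply: sub; exists z.
rewrite compact_ultra in Cc.
have [g [_ Fg]] := Cc _ (ultra_fmap _ snd FU) (FC : (snd @ F) C).
have Fy : F --> (w1, g).
  move=> P [[P1 P2] [/= h1 h2] sb].
  have Fa : F (fst @^-1` P1) := F1 _ h1.
  have Fb : F (snd @^-1` P2) := Fg _ h2.
  by apply: filterS (filterI Fa Fb) => -[a b] [? ?]; apply: (sb (a, b)); split.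
have mom_eq : mom A w1 = rg Gd g.
  apply: (cvg_unique hX (F := (fun p : Z * G => mom A p.1) @ F)).
    exact: cvg_comp F1 (@mom_cont _ _ _ _ A w1).
  move=> B Bg.
  have FB : F ((fun p : Z * G => rg Gd p.2) @^-1` B) :=
    cvg_comp _ _ Fg (@rg_cont _ _ Gd g) B Bg.
  suff : F ((fun p : Z * G => mom A p.1) @^-1` B) by [].
  by apply: filterS (filterI FD FB) => -[a b] [/= -> ?].
have Dy : D (w1, g) := mom_eq.
have act_eq : act A w1 g = w2.
  apply: (cvg_unique hZ (F := (fun p : Z * G => act A p.1 p.2) @ F)); last exact: F2.
  have ac := (subspace_continuousP _ _).1 (@act_cont _ _ _ _ A) (w1, g) Dy.
  move=> P /ac /Fy FP.
  by apply: filterS (filterI FD FP) => q [Dq Pq]; apply: Pq.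
by exists (w1, g); split => //; rewrite /trans_rs /= act_eq.
Qed.

End Act.
Section M.
Context {G X Z : topologicalType} {Gd : topGroupoid G X} (A : rightAction Gd Z).

Lemma iii'_of_iii : cond_iii A -> cond_iii' A.
Proof. by move=> H K L [Kc _] [Lc _]; exact: H. Qed.

Lemma iv_of_iii : cond_iii A -> cond_iv A.
Proof. by move=> H K Kc; exact: H. Qed.

Lemma v_of_iii' : loc_compact Z -> cond_iii' A -> cond_v A.
Proof.
move=> lc H.
exists Z, (fun z => projT1 (cid (lc z))); split.
  apply/seteqP; split => // z _; exists z => //.
  exact: (projT2 (cid (lc z))).1.
move=> i j; exists (transporter A (projT1 (cid (lc i))) (projT1 (cid (lc j)))).
by split => //; apply: H; [exact: (projT2 (cid (lc j))).2|exact: (projT2 (cid (lc i))).2].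
Qed.

Lemma v_of_iv : loc_compact Z -> cond_iv A -> cond_v A.
Proof.
move=> lc H.
exists Z, (fun z => projT1 (cid (lc z))); split.
  apply/seteqP; split => // z _; exists z => //.
  exact: (projT2 (cid (lc z))).1.
move=> i j.
set Ni := projT1 (cid (lc i)); set Nj := projT1 (cid (lc j)).
exists (transporter A (Ni `|` Nj) (Ni `|` Nj)); split.
  apply: H; apply: compactU.
    exact: (projT2 (cid (lc i))).2.1.
  exact: (projT2 (cid (lc j))).2.1.
by move=> g [z [Lz mz Kz]]; exists z; split => //; [left|right].
Qed.

End M.

Theorem proposition2p14 (G X Z : topologicalType) (Gd : topGroupoid G X)
    (A : rightAction Gd Z) :
  [/\ (proper_action A <-> cond_ii A),
      (cond_ii A -> cond_iii A),
      (cond_iii A -> cond_iii' A),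
      (cond_iii A -> cond_iv A)
    & (loc_compact Z -> (cond_iii' A -> cond_v A) /\ (cond_iv A -> cond_v A))] /\
  (hausdorff_space X -> hausdorff_space Z -> loc_compact Z ->
        [/\ (proper_action A <-> cond_iii A), (proper_action A <-> cond_iii' A),
            (proper_action A <-> cond_iv A) & (proper_action A <-> cond_v A)]).
Proof.
have i_ii : proper_action A <-> cond_ii A.
  split=> [Hp|[cl st]]; first by split; [exact: Hp.1|exact: stab_of_proper].
  by split => //; exact: fib_of_stab.
split.
  split => //.
  - by move=> /i_ii; exact: iii_of_proper.
  - exact: iii'_of_iii.
  - exact: iv_of_iii.
  - by move=> lc; split; [exact: v_of_iii'|exact: v_of_iv].
move=> hX hZ lc.
have vi : cond_v A -> proper_action A.
  by move=> v; apply: Pultra_proper; exact: Pultra_of_v.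
have i_iii := @iii_of_proper _ _ _ _ A.
split; split => //.
- move=> H; apply: vi; apply: v_of_iii' => //; exact: iii'_of_iii.
- by move=> H; apply: iii'_of_iii; exact: i_iii.
- by move=> H; apply: vi; exact: v_of_iii'.
- by move=> H; apply: iv_of_iii; exact: i_iii.
- by move=> H; apply: vi; exact: v_of_iv.
- by move=> H; apply: v_of_iii' => //; apply: iii'_of_iii; exact: i_iii.
Qed.
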